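(* For any vector $|\psi\rangle\in\mathbb{C}^d$ and any positive semidefinite operators $P_1,P_2$ on $\mathbb{C}^d$, $$\langle\psi|P_1|\psi\rangle^2+\langle\psi|P_2|\psi\rangle^2\le\langle\psi|\sqrt{P_1^2+P_2^2}|\psi\rangle^2.$$ *)

(* Defs.v *)
From mathcomp Require Import all_boot all_order all_algebra.
Set Implicit Arguments. Unset Strict Implicit. Unset Printing Implicit Defensive.
Import Order.TTheory GRing.Theory Num.Theory.
Local Open Scope ring_scope.

(* Complex numbers: an arbitrary numClosedFieldType C (e.g. complex R for a
   realType R, or algC).  Vectors of C^d are column vectors 'cV[C]_d. *)

Definition adjmx (C : numClosedFieldType) m n (A : 'M[C]_(m, n)) : 'M[C]_(n, m) :=
  map_mx Num.conj (A^T).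

Definition expect (C : numClosedFieldType) d (A : 'M[C]_d) (psi : 'cV[C]_d) : C :=
  (adjmx psi *m A *m psi) 0 0.

Definition psdmx (C : numClosedFieldType) d (A : 'M[C]_d) : Prop :=
  adjmx A = A /\ forall v : 'cV[C]_d, 0 <= expect A v.

(* For A positive semidefinite this is the unique PSD square root. *)
Definition sqrtmx (C : numClosedFieldType) d (A : 'M[C]_d) : 'M[C]_d :=
  invmx (spectralmx A) *m diag_mx (map_mx sqrtC (spectral_diag A)) *m spectralmx A.

(* Main.v *)
Require Import Defs.
From mathcomp Require Import all_boot all_order all_algebra ring.
Import Order.TTheory GRing.Theory Num.Theory.
Local Open Scope ring_scope.
Lemma adjmxE {C : numClosedFieldType} m n (A : 'M[C]_(m, n)) i j :
  adjmx A i j = (A j i)^*.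
Proof. by rewrite /adjmx !mxE. Qed.

Lemma adjmxK {C : numClosedFieldType} m n (A : 'M[C]_(m, n)) : adjmx (adjmx A) = A.
Proof. by apply/matrixP => i j; rewrite !adjmxE conjCK. Qed.

Lemma adjmxM {C : numClosedFieldType} m n p (A : 'M[C]_(m, n)) (B : 'M[C]_(n, p)) :
  adjmx (A *m B) = adjmx B *m adjmx A.
Proof. by rewrite /adjmx trmx_mul map_mxM. Qed.

Lemma adjmxD {C : numClosedFieldType} m n (A B : 'M[C]_(m, n)) :
  adjmx (A + B) = adjmx A + adjmx B.
Proof. by apply/matrixP => i j; rewrite /adjmx !mxE rmorphD. Qed.

Lemma adjmxB {C : numClosedFieldType} m n (A B : 'M[C]_(m, n)) :
  adjmx (A - B) = adjmx A - adjmx B.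
Proof. by apply/matrixP => i j; rewrite /adjmx !mxE rmorphB. Qed.

Lemma adjmxZ {C : numClosedFieldType} m n (a : C) (A : 'M[C]_(m, n)) :
  adjmx (a *: A) = a^* *: adjmx A.
Proof. by apply/matrixP => i j; rewrite /adjmx !mxE rmorphM. Qed.

Lemma expectD {C : numClosedFieldType} d (A B : 'M[C]_d) v :
  expect (A + B) v = expect A v + expect B v.
Proof. by rewrite /expect mulmxDr mulmxDl mxE. Qed.

Lemma expectB {C : numClosedFieldType} d (A B : 'M[C]_d) v :
  expect (A - B) v = expect A v - expect B v.
Proof. by rewrite /expect mulmxBr mulmxBl !mxE. Qed.

Lemma expectZ {C : numClosedFieldType} d (a : C) (A : 'M[C]_d) v :
  expect (a *: A) v = a * expect A v.
Proof. by rewrite /expect -scalemxAr -scalemxAl mxE. Qed.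

Lemma gram_ge0 {C : numClosedFieldType} d (w : 'cV[C]_d) :
  0 <= (adjmx w *m w) 0 0.
Proof.
rewrite mxE; apply: sumr_ge0 => k _; rewrite adjmxE mulrC; exact: mul_conjC_ge0.
Qed.

Lemma expect_sq {C : numClosedFieldType} d (Y : 'M[C]_d) v :
  adjmx Y = Y -> 0 <= expect (Y *m Y) v.
Proof.
move=> hY; rewrite /expect.
have -> : adjmx v *m (Y *m Y) *m v = adjmx (Y *m v) *m (Y *m v).
  by rewrite adjmxM hY !mulmxA.
exact: gram_ge0.
Qed.

Lemma expect_conj {C : numClosedFieldType} d (A : 'M[C]_d) v :
  (expect A v)^* = expect (adjmx A) v.
Proof.
rewrite /expect; have <- := @adjmxE _ _ _ (adjmx v *m A *m v) 0 0.
by rewrite !adjmxM adjmxK mulmxA.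
Qed.

Lemma expect_real {C : numClosedFieldType} d (A : 'M[C]_d) v :
  adjmx A = A -> expect A v \is Num.real.
Proof. by move=> hA; apply/CrealP; rewrite expect_conj hA. Qed.
Lemma expect_spec {C : numClosedFieldType} n (U : 'M[C]_n) e v :
  expect (adjmx U *m diag_mx e *m U) v =
  \sum_i e 0 i * ((U *m v) i 0 * ((U *m v) i 0)^*).
Proof.
rewrite /expect.
have -> : adjmx v *m (adjmx U *m diag_mx e *m U) *m v =
          adjmx (U *m v) *m diag_mx e *m (U *m v) by rewrite adjmxM !mulmxA.
set w := U *m v.
rewrite mxE; apply: eq_bigr => k _; rewrite mul_mx_diag !mxE; ring.
Qed.

Lemma adj_delta {C : numClosedFieldType} m n (i : 'I_m) (j : 'I_n) :
  adjmx (delta_mx i j : 'M[C]_(m, n)) = delta_mx j i.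
Proof. by apply/matrixP => a b; rewrite /adjmx !mxE rmorph_nat andbC. Qed.

Lemma diag_delta {C : numClosedFieldType} n (e : 'rV[C]_n) i :
  diag_mx e *m delta_mx i 0 = e 0 i *: (delta_mx i 0 : 'cV_n).
Proof.
apply/matrixP => a b; rewrite mul_diag_mx !mxE.
by case: (eqVneq a i) => [->|]; rewrite ?mulr1 ?mulr0 //= andbF mulr0.
Qed.

Lemma eig_spec {C : numClosedFieldType} n (U : 'M[C]_n) (e : 'rV[C]_n) i :
  U *m adjmx U = 1%:M ->
  let w := adjmx U *m delta_mx i 0 in
  [/\ (adjmx U *m diag_mx e *m U) *m w = e 0 i *: w,
      adjmx w *m w = 1%:M &
      expect (adjmx U *m diag_mx e *m U) w = e 0 i].
Proof.
move=> hU w.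
have h1 : (adjmx U *m diag_mx e *m U) *m w = e 0 i *: w.
  rewrite /w -!mulmxA (mulmxA U) hU mul1mx diag_delta.
  by rewrite scalemxAr.
have h2 : adjmx w *m w = 1%:M.
  rewrite /w adjmxM adjmxK adj_delta -mulmxA (mulmxA U) hU mul1mx mul_delta_mx.
  by apply/matrixP => a b; rewrite !ord1 !mxE.
split => //.
by rewrite /expect -mulmxA h1 -scalemxAr h2 mxE mxE eqxx mulr1.
Qed.
Lemma key {C : numClosedFieldType} d (X S : 'M[C]_d) psi :
  adjmx X = X -> adjmx S = S -> (forall v, 0 <= expect S v) ->
  (forall v, expect (X *m X) v <= expect (S *m S) v) ->
  expect X psi <= expect S psi.
Proof.
move=> hX hS S0 hXS.
set D := X - S.
have hD : adjmx D = D by rewrite /D adjmxB hX hS.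
have nD : D \is normalmx.
  by apply/normalmxP; change (D *m adjmx D = adjmx D *m D); rewrite hD.
move/orthomx_spectralP: nD => eD.
have uU := spectral_unitarymx D.
have hU : spectralmx D *m adjmx (spectralmx D) = 1%:M by apply/unitarymxP.
rewrite invmx_unitary // in eD.
change (D = adjmx (spectralmx D) *m diag_mx (spectral_diag D) *m spectralmx D) in eD.
set U := spectralmx D in eD hU.
set e := spectral_diag D in eD.
rewrite -subr_le0 -expectB -/D eD expect_spec; apply: sumr_le0 => i _.
apply: mulr_le0_ge0; last first.
  exact: mul_conjC_ge0.
have [h1 h2 h3] := @eig_spec _ _ U e i hU.
set w := adjmx U *m delta_mx i 0 in h1 h2 h3.
rewrite -eD in h1 h3.
set l := e 0 i in h1 h3 *.
have lr : l \is Num.real by rewrite -h3; apply: expect_real.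
have lc : l^* = l by apply/CrealP.
set x := expect X w.
have eS : S = X - D by rewrite /D opprB addrC subrK.
have sw : expect S w = x - l by rewrite eS expectB h3.
have eXD : expect (X *m D) w = l * x.
  by rewrite /expect mulmxA -mulmxA h1 -scalemxAr mxE.
have eDX : expect (D *m X) w = l * x.
  rewrite /expect mulmxA.
  have -> : adjmx w *m D = l *: adjmx w by rewrite -hD -adjmxM h1 adjmxZ lc.
  by rewrite -!scalemxAl mxE.
have eDD : expect (D *m D) w = l * l.
  rewrite /expect mulmxA.
  have -> : adjmx w *m D = l *: adjmx w by rewrite -hD -adjmxM h1 adjmxZ lc.
  by rewrite -!scalemxAl -mulmxA h1 -scalemxAr h2 !mxE eqxx mulr1.
have hyp := hXS w.
clearbody D.
have eSS : S *m S = X *m X - X *m D - (D *m X - D *m D).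
  by rewrite eS mulmxBl !mulmxBr.
rewrite eSS !expectB eXD eDX eDD in hyp.
set q := expect (X *m X) w in hyp.
have h0 : 0 <= l * (l - x - x).
  have e1 : q - l * x - (l * x - l * l) - q = l * (l - x - x) by ring.
  by rewrite -e1 subr_ge0.
have s0 : 0 <= x - l by rewrite -sw.
rewrite real_leNgt ?real0 //; apply/negP => lpos.
rewrite pmulr_rge0 // in h0.
have : 0 <= (l - x - x) + (x - l) by apply: addr_ge0.
have -> : (l - x - x) + (x - l) = - x by ring.
rewrite oppr_ge0 => x0.
have : l <= x by rewrite -subr_ge0.
move=> lx.
have := lt_le_trans lpos (le_trans lx x0).
by rewrite ltxx.
Qed.
Lemma sqrt_facts {C : numClosedFieldType} d (Q : 'M[C]_d) :
  adjmx Q = Q -> (forall v, 0 <= expect Q v) ->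
  [/\ adjmx (sqrtmx Q) = sqrtmx Q, forall v, 0 <= expect (sqrtmx Q) v &
      sqrtmx Q *m sqrtmx Q = Q].
Proof.
move=> hQ Q0.
have nQ : Q \is normalmx.
  by apply/normalmxP; change (Q *m adjmx Q = adjmx Q *m Q); rewrite hQ.
move/orthomx_spectralP: nQ => eQ.
have uU := spectral_unitarymx Q.
have hU : spectralmx Q *m adjmx (spectralmx Q) = 1%:M by apply/unitarymxP.
rewrite /sqrtmx invmx_unitary //.
rewrite invmx_unitary // in eQ.
change (Q = adjmx (spectralmx Q) *m diag_mx (spectral_diag Q) *m spectralmx Q) in eQ.
change (adjmx (spectralmx Q) *m diag_mx (map_mx sqrtC (spectral_diag Q)) *m spectralmx Q)
  with (adjmx (spectralmx Q) *m diag_mx (map_mx sqrtC (spectral_diag Q)) *m spectralmx Q).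
set U := spectralmx Q in eQ hU *.
set q := spectral_diag Q in eQ *.
have q0 : forall i, 0 <= q 0 i.
  move=> i; have [_ _ h3] := @eig_spec _ _ U q i hU.
  by rewrite -eQ in h3; rewrite -h3.
set r := map_mx sqrtC q.
have r0 : forall i, 0 <= r 0 i by move=> i; rewrite mxE sqrtC_ge0.
split.
- rewrite !adjmxM adjmxK mulmxA.
  have -> : adjmx (diag_mx r) = diag_mx r.
    apply/matrixP => a b; rewrite /adjmx !mxE rmorphMn eq_sym.
    case: eqVneq => [->|_]; rewrite ?eqxx ?mulr1n ?mulr0n ?rmorph0 //.
    by apply/CrealP/ger0_real; rewrite sqrtC_ge0 q0.
  by [].
- move=> v; rewrite expect_spec; apply: sumr_ge0 => i _.
  by apply: mulr_ge0; [exact: r0 | exact: mul_conjC_ge0].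
- have -> : adjmx U *m diag_mx r *m U *m (adjmx U *m diag_mx r *m U) =
            adjmx U *m (diag_mx r *m (U *m adjmx U) *m diag_mx r) *m U.
    by rewrite !mulmxA.
  rewrite hU mulmx1 mulmx_diag eQ; congr (_ *m diag_mx _ *m _).
  by apply/rowP => j; rewrite !mxE -expr2 sqrtCK.
Qed.

Theorem mainTheorem5 (C : numClosedFieldType) (d : nat) (psi : 'cV[C]_d)
  (P1 P2 : 'M[C]_d) :
  psdmx P1 -> psdmx P2 ->
  expect P1 psi ^+ 2 + expect P2 psi ^+ 2
    <= expect (sqrtmx (P1 *m P1 + P2 *m P2)) psi ^+ 2.
Proof.
move=> [h1 p1] [h2 p2].
set a := expect P1 psi; set b := expect P2 psi.
set Q := P1 *m P1 + P2 *m P2.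
have hQ : adjmx Q = Q by rewrite /Q adjmxD !adjmxM h1 h2.
have Q0 : forall v, 0 <= expect Q v.
  by move=> v; rewrite /Q expectD addr_ge0 // expect_sq.
have [hS S0 SS] := @sqrt_facts _ _ Q hQ Q0.
set S := sqrtmx Q in hS S0 SS *.
have a0 : 0 <= a := p1 psi.
have b0 : 0 <= b := p2 psi.
have ac : a^* = a by apply/CrealP/ger0_real.
have bc : b^* = b by apply/CrealP/ger0_real.
set r := sqrtC (a ^+ 2 + b ^+ 2).
have r0 : 0 <= r by rewrite sqrtC_ge0 addr_ge0 // exprn_ge0.
have rc : r^* = r by apply/CrealP/ger0_real.
have er : a ^+ 2 + b ^+ 2 = r ^+ 2 by rewrite sqrtCK.
set X := a *: P1 + b *: P2.
set Y := b *: P1 - a *: P2.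
have hX : adjmx X = X by rewrite /X adjmxD !adjmxZ ac bc h1 h2.
have hY : adjmx Y = Y by rewrite /Y adjmxB !adjmxZ ac bc h1 h2.
have hS' : adjmx (r *: S) = r *: S by rewrite adjmxZ rc hS.
have S'0 : forall v, 0 <= expect (r *: S) v.
  by move=> v; rewrite expectZ mulr_ge0.
have eq : (r *: S) *m (r *: S) = X *m X + Y *m Y.
  rewrite -scalemxAl -scalemxAr scalerA SS -expr2 -er /Q /X /Y.
  rewrite !mulmxDl !mulmxDr ?mulmxBl ?mulmxBr -!scalemxAl -!scalemxAr !scalerA.
  rewrite ?mulNmx ?mulmxN -?scalemxAl -?scalemxAr ?scalerA.
  move: (P1 *m P1) (P1 *m P2) (P2 *m P1) (P2 *m P2) => A B E F.
  apply/matrixP => i j; rewrite !mxE.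
  move: (A i j) (B i j) (E i j) (F i j) => x y z t; ring.
have hXS : forall v, expect (X *m X) v <= expect ((r *: S) *m (r *: S)) v.
  by move=> v; rewrite eq expectD lerDl expect_sq.
have := @key _ _ X (r *: S) psi hX hS' S'0 hXS.
rewrite /X expectD !expectZ -/a -/b.
set c := expect S psi.
have c0 : 0 <= c := S0 psi.
rewrite er.
case: (eqVneq r 0) => [-> _ | rn0 hle].
  by rewrite expr2 mul0r exprn_ge0.
have rpos : 0 < r by rewrite lt_def rn0 r0.
rewrite expr2 ler_pM2l // in hle.
by rewrite !expr2 ler_pM.
Qed.
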